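(* Let $R$ be a generalized Reedy category, $R_0$ a strict Reedy category and $c:R_0\to R$ a functor satisfying Condition (C). Then the projection $p:\mathbf{D}_R\to R$ is absolutely dense, i.e. the precomposition functor $p^*:\mathbf{Set}^{R}\to\mathbf{Set}^{\mathbf{D}_R}$ is fully faithful.
   Context: A generalized Reedy category (in the sense of Cisinski and Berger–Moerdijk) is a small category $R$ with a degree function $\deg:\mathrm{Ob}(R)\to\mathbb{N}$ and two wide subcategories $R_+,R_-$, both containing all isomorphisms, such that: non-invertible maps of $R_+$ raise the degree, non-invertible maps of $R_-$ lower the degree, isomorphisms preserve the degree; $R_+\cap R_-$ is the groupoid of isomorphisms of $R$; every morphism factors as a map of $R_-$ followed by a map of $R_+$, uniquely up to unique isomorphism; and if $\theta$ is an isomorphism and $f\in R_-$ with $\theta f = f$, then $\theta$ is an identity. A (strict) Reedy category is one in which the only isomorphisms are identities. Condition (C) on a functor $c:R_0\to R$ from a strict Reedy category $R_0$: for every arrow $f:a\to b$ in $R$ there exist an arrow $k:x\to y$ in $R_0$ and isomorphisms $w:a\cong c(x)$, $w':b\cong c(y)$ in $R$ with $w'\circ f = c(k)\circ w$. Construction of $\mathbf{D}_R$: let $\mathbf{F}$ denote the free-category comonad on $\mathbf{Cat}$ ($\mathbf{F}(C)$ is the free category on the underlying graph of $C$, whose morphisms are paths of composable arrows of $C$, with counit $\mathbf{F}(C)\to C$ given by composition). Let $\mathbf{F}_\simeq(R)$ be the pushout in $\mathbf{Cat}$ of $R_0 \xleftarrow{\text{counit}} \mathbf{F}(R_0) \xrightarrow{\mathbf{F}(c)}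 \mathbf{F}(R)$; the functors $c:R_0\to R$ and the counit $\mathbf{F}(R)\to R$ induce a functor $p_0:\mathbf{F}_\simeq(R)\to R$. Call a ''free isomorphism'' the image in $\mathbf{F}_\simeq(R)$ of a path of length one in $R$ whose single arrow is an isomorphism of $R$. The twisted arrow category $\mathbf{Tw}(C)$ of a category $C$ has as objects the arrows $u:a\to b$ of $C$, and a morphism from $u:a\to b$ to $u':a'\to b'$ is a pair $(s:a'\to a,\ t:b\to b')$ with $u'=t\circ u\circ s$. Then $\mathbf{D}_R$ is the full subcategory of $\mathbf{Tw}(\mathbf{F}_\simeq(R))$ on the arrows of the form $x\to z\to y$ where $x\to z$ is the image of a map of $R_0$ and $z\to y$ is either an identity or a free isomorphism. The projection $p:\mathbf{D}_R\to R$ sends an object $u:a\to b$ to $p_0(b)$ and a morphism $(s,t)$ to $p_0(t)$. *)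

(* Defs.v *)
(* Categories are small categories whose hom-types carry an
   equivalence relation [heq] (setoid-enriched categories); this is needed to
   represent quotient categories such as the pushout F_~(R) without quotient
   types.  An ordinary category is the case heq = eq. *)
From Stdlib Require Import RelationClasses Morphisms Setoid PeanoNat.

Record Category : Type := {
  Ob :> Type;
  Hom : Ob -> Ob -> Type;
  heq : forall a b, Hom a b -> Hom a b -> Prop;
  heq_equiv : forall a b, Equivalence (heq a b);
  idm : forall a, Hom a a;
  comp : forall a b c, Hom b c -> Hom a b -> Hom a c;
  comp_proper : forall a b c (f f' : Hom b c) (g g' : Hom a b),
      heq b c f f' -> heq a b g g' -> heq a c (comp a b c f g) (comp a b c f' g');
  comp_idl : forall a b (f : Hom a b), heq a b (comp a b b (idm b) f) f;
  comp_idr : forall a b (f : Hom a b), heq a b (comp a a b f (idm a)) f;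
  comp_assoc : forall a b c d (f : Hom c d) (g : Hom b c) (h : Hom a b),
      heq a d (comp a b d (comp b c d f g) h) (comp a c d f (comp a b c g h))
}.

Arguments Hom {C} a b : rename.
Arguments heq {C a b} f g : rename.
Arguments idm {C} a : rename.
Arguments comp {C a b c} f g : rename.
Arguments heq_equiv {C} a b : rename.
Arguments comp_idl {C a b} f : rename.
Arguments comp_idr {C a b} f : rename.
Arguments comp_assoc {C a b c d} f g h : rename.

Infix "≈" := heq (at level 70).
Notation "f ∘ g" := (comp f g) (at level 40, left associativity).

Global Existing Instance heq_equiv.
Global Instance comp_Proper (C : Category) (a b c : C) :
  Proper (heq ==> heq ==> heq) (@comp C a b c).
Proof. intros f f' Hf g g' Hg. now apply comp_proper. Qed.

Definition is_iso {C : Category} {a b : C} (f : Hom a b) : Prop :=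
  exists g : Hom b a, g ∘ f ≈ idm a /\ f ∘ g ≈ idm b.

Definition is_identity {C : Category} {a b : C} (f : Hom a b) : Prop :=
  exists e : a = b, f ≈ eq_rect a (fun x => Hom a x) (idm a) b e.

Record Functor (C D : Category) : Type := {
  fobj :> C -> D;
  fmap : forall a b : C, Hom a b -> Hom (fobj a) (fobj b);
  fmap_proper : forall a b (f g : Hom a b), f ≈ g -> fmap a b f ≈ fmap a b g;
  fmap_id : forall a, fmap a a (idm a) ≈ idm (fobj a);
  fmap_comp : forall a b c (f : Hom b c) (g : Hom a b),
      fmap a c (f ∘ g) ≈ fmap b c f ∘ fmap a b g
}.
Arguments fobj {C D} F _ : rename.
Arguments fmap {C D} F {a b} f : rename.
Arguments fmap_proper {C D} F {a b f g} _ : rename.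
Arguments fmap_id {C D} F a : rename.
Arguments fmap_comp {C D} F {a b c} f g : rename.

Definition Fcomp {C D E : Category} (G : Functor D E) (F : Functor C D) :
  Functor C E.
Proof.
  refine {| fobj := fun a => G (F a);
            fmap := fun a b f => fmap G (fmap F f) |}.
  - intros a b f g H. now apply fmap_proper, fmap_proper.
  - intros a. rewrite (fmap_proper G (fmap_id F a)). apply fmap_id.
  - intros a b c f g. rewrite (fmap_proper G (fmap_comp F f g)). apply fmap_comp.
Defined.

(** * Generalized Reedy categories (Cisinski, Berger--Moerdijk) *)

Record WideIsoSub (C : Category) : Type := {
  wmem : forall a b : C, Hom a b -> Prop;
  wmem_proper : forall a b (f g : Hom a b), f ≈ g -> wmem a b f -> wmem a b g;
  wmem_iso : forall a b (f : Hom a b), is_iso f -> wmem a b f;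
  wmem_comp : forall a b c (f : Hom b c) (g : Hom a b),
      wmem b c f -> wmem a b g -> wmem a c (f ∘ g)
}.
Arguments wmem {C} S {a b} f : rename.

Record GenReedy (R : Category) : Type := {
  deg : R -> nat;
  Rplus : WideIsoSub R;
  Rminus : WideIsoSub R;
  plus_raise : forall a b (f : Hom a b),
      wmem Rplus f -> ~ is_iso f -> deg a < deg b;
  minus_lower : forall a b (f : Hom a b),
      wmem Rminus f -> ~ is_iso f -> deg b < deg a;
  iso_deg : forall a b (f : Hom a b), is_iso f -> deg a = deg b;
  plus_minus_iso : forall a b (f : Hom a b),
      wmem Rplus f -> wmem Rminus f -> is_iso f;
  factor_exists : forall a b (f : Hom a b),
      exists (z : R) (g : Hom a z) (h : Hom z b),
        wmem Rminus g /\ wmem Rplus h /\ h ∘ g ≈ f;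
  factor_unique : forall a b (f : Hom a b)
      (z : R) (g : Hom a z) (h : Hom z b) (z' : R) (g' : Hom a z') (h' : Hom z' b),
      wmem Rminus g -> wmem Rplus h -> h ∘ g ≈ f ->
      wmem Rminus g' -> wmem Rplus h' -> h' ∘ g' ≈ f ->
      exists theta : Hom z z',
        is_iso theta /\ theta ∘ g ≈ g' /\ h' ∘ theta ≈ h /\
        (forall theta' : Hom z z', is_iso theta' ->
             theta' ∘ g ≈ g' -> h' ∘ theta' ≈ h -> theta' ≈ theta);
  iso_fix_minus : forall a b (f : Hom a b) (theta : Hom b b),
      wmem Rminus f -> is_iso theta -> theta ∘ f ≈ f -> theta ≈ idm b
}.

(** A (strict) Reedy category: a generalized Reedy category whose only
    isomorphisms are identities. *)
Definition only_identity_isos (C : Category) : Prop :=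
  forall (a b : C) (f : Hom a b), is_iso f -> is_identity f.

Definition conditionC {R0 R : Category} (c : Functor R0 R) : Prop :=
  forall (a b : R) (f : Hom a b),
    exists (x y : R0) (k : Hom x y) (w : Hom a (c x)) (w' : Hom b (c y)),
      is_iso w /\ is_iso w' /\ w' ∘ f ≈ fmap c k ∘ w.

(** * Paths (morphisms of the free category F(C)) *)

Inductive path (C : Category) : C -> C -> Type :=
| pnil : forall a : C, path C a a
| pcons : forall a b c : C, Hom b c -> path C a b -> path C a c.
Arguments pnil {C} a.
Arguments pcons {C a b c} f p.

(** concatenation: [papp q p] is "q after p" *)
Fixpoint papp {C : Category} {a b c : C} (q : path C b c) : path C a b -> path C a c :=
  match q in path _ b' c' return path C a b' -> path C a c' with
  | pnil _ => fun p => p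
  | pcons f q' => fun p => pcons f (papp q' p)
  end.

Definition single {C : Category} {a b : C} (f : Hom a b) : path C a b :=
  pcons f (pnil a).

Fixpoint map_path {C D : Category} (F : Functor C D) {a b : C} (p : path C a b) :
  path D (F a) (F b) :=
  match p with
  | pnil a => pnil (F a)
  | pcons f q => pcons (fmap F f) (map_path F q)
  end.

(** the counit F(C) -> C: composition of a path *)
Fixpoint pcompose {C : Category} {a b : C} (p : path C a b) : Hom a b :=
  match p with
  | pnil a => idm a
  | pcons f q => f ∘ pcompose q
  end.

Lemma papp_nil_r {C : Category} {a b : C} (p : path C a b) : papp p (pnil a) = p.
Proof. induction p; simpl; congruence. Qed.

Lemma papp_assoc {C : Category} {a b c d : C} (r : path C c d) (q : path C b c)
  (p : path C a b) : papp r (papp q p) = papp (papp r q) p.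
Proof. induction r; simpl; congruence. Qed.

Lemma pcompose_app {C : Category} {a b c : C} (q : path C b c) (p : path C a b) :
  pcompose (papp q p) ≈ pcompose q ∘ pcompose p.
Proof.
  induction q; simpl.
  - symmetry; apply comp_idl.
  - rewrite IHq. symmetry; apply comp_assoc.
Qed.

Lemma pcompose_map {C D : Category} (F : Functor C D) {a b : C} (p : path C a b) :
  pcompose (map_path F p) ≈ fmap F (pcompose p).
Proof.
  induction p; simpl.
  - symmetry; apply fmap_id.
  - rewrite IHp. symmetry; apply fmap_comp.
Qed.

(** * The pushout F_~(R) of  R0 <- F(R0) -> F(R)

   Since the counit F(R0) -> R0 is the identity on objects and full, the
   pushout in Cat is the quotient of F(R) (objects of R, paths in R) by the
   congruence generated by  F(c)(pi) ~ [c(eps pi)]  for every path pi of R0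
   (eps = composition in R0).  Equality of paths in F(R) itself is
   componentwise [≈]. *)

Section Pushout.
Context {R0 R : Category} (c : Functor R0 R).

Inductive fsim : forall a b : R, path R a b -> path R a b -> Prop :=
| fsim_refl : forall a b (p : path R a b), fsim a b p p
| fsim_sym : forall a b (p q : path R a b), fsim a b p q -> fsim a b q p
| fsim_trans : forall a b (p q r : path R a b),
    fsim a b p q -> fsim a b q r -> fsim a b p r
| fsim_arrow : forall a b (f g : Hom a b), f ≈ g -> fsim a b (single f) (single g)
| fsim_rel : forall (x y : R0) (pi : path R0 x y),
    fsim (c x) (c y) (map_path c pi) (single (fmap c (pcompose pi)))
| fsim_congl : forall a b d (r : path R b d) (p q : path R a b),
    fsim a b p q -> fsim a d (papp r p) (papp r q)
| fsim_congr : forall a b d (p q : path R b d) (s : path R a b),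
    fsim b d p q -> fsim a d (papp p s) (papp q s).

Definition FsimCat : Category.
Proof.
  refine {| Ob := Ob R; Hom := path R; heq := fsim; idm := pnil;
            comp := fun a b d q p => papp q p |}.
  - intros a b. split.
    + intros p; apply fsim_refl.
    + intros p q; apply fsim_sym.
    + intros p q r; apply fsim_trans.
  - intros a b d f f' g g' Hf Hg.
    eapply fsim_trans. apply fsim_congr, Hf. apply fsim_congl, Hg.
  - intros a b f. apply fsim_refl.
  - intros a b f. simpl. rewrite papp_nil_r. apply fsim_refl.
  - intros a b d e f g h. simpl. rewrite papp_assoc. apply fsim_refl.
Defined.

Definition p0 : Functor FsimCat R.
Proof.
  refine {| fobj := fun a : FsimCat => (a : R);
            fmap := fun a b (p : path R a b) => pcompose p |}.
  - intros a b f g H. induction H; simpl.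
    + reflexivity.
    + now symmetry.
    + etransitivity; eassumption.
    + now rewrite H.
    + rewrite pcompose_map, comp_idr. reflexivity.
    + rewrite !pcompose_app, IHfsim. reflexivity.
    + rewrite !pcompose_app, IHfsim. reflexivity.
  - intros a. reflexivity.
  - intros a b d f g. apply pcompose_app.
Defined.

Definition free_iso {a b : R} (v : @Hom FsimCat a b) : Prop :=
  exists f : Hom a b, is_iso f /\ v ≈ (single f : @Hom FsimCat a b).

End Pushout.

Record TwOb (C : Category) : Type := { tdom : C; tcod : C; tarr : Hom tdom tcod }.
Arguments tdom {C} _.
Arguments tcod {C} _.
Arguments tarr {C} _.

Record TwHom (C : Category) (u u' : TwOb C) : Type := {
  tws : Hom (tdom u') (tdom u);
  twt : Hom (tcod u) (tcod u');
  tw_eq : tarr u' ≈ twt ∘ (tarr u ∘ tws)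
}.
Arguments tws {C u u'} _.
Arguments twt {C u u'} _.

Definition tw_id {C : Category} (u : TwOb C) : TwHom C u u.
Proof.
  refine {| tws := idm (tdom u); twt := idm (tcod u) |}.
  rewrite comp_idl, comp_idr. reflexivity.
Defined.

Definition tw_comp {C : Category} {u v w : TwOb C} (g : TwHom C v w) (f : TwHom C u v) :
  TwHom C u w.
Proof.
  refine {| tws := tws f ∘ tws g; twt := twt g ∘ twt f |}.
  rewrite (tw_eq _ _ _ g), (tw_eq _ _ _ f). rewrite !comp_assoc. reflexivity.
Defined.

Definition Tw (C : Category) : Category.
Proof.
  refine {| Ob := TwOb C; Hom := TwHom C;
            heq := fun u u' f g => tws f ≈ tws g /\ twt f ≈ twt g;
            idm := tw_id;
            comp := fun u v w g f => tw_comp g f |}.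
  - intros u u'. split.
    + intros f; split; reflexivity.
    + intros f g [H1 H2]; split; now symmetry.
    + intros f g h [H1 H2] [H3 H4]; split; etransitivity; eassumption.
  - intros u v w f f' g g' [H1 H2] [H3 H4]; simpl; split.
    + now rewrite H1, H3.
    + now rewrite H2, H4.
  - intros u v f; simpl; split; [apply comp_idr | apply comp_idl].
  - intros u v f; simpl; split; [apply comp_idl | apply comp_idr].
  - intros u v w x f g h; simpl; split; [symmetry|]; apply comp_assoc.
Defined.

Definition TwCod (C : Category) : Functor (Tw C) C.
Proof.
  refine {| fobj := fun u : Tw C => tcod u;
            fmap := fun u v (f : TwHom C u v) => twt f |}.
  - intros u v f g [H1 H2]; exact H2.
  - intros u; reflexivity.
  - intros u v w f g; reflexivity.
Defined.

Definition FullSub (C : Category) (P : C -> Prop) : Category.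
Proof.
  refine {| Ob := { x : C | P x };
            Hom := fun x y => @Hom C (proj1_sig x) (proj1_sig y);
            heq := fun x y f g => f ≈ g;
            idm := fun x => idm (proj1_sig x);
            comp := fun x y z f g => f ∘ g |}.
  - intros a b d f f' g g' Hf Hg; exact (comp_proper C _ _ _ f f' g g' Hf Hg).
  - intros; apply comp_idl.
  - intros; apply comp_idr.
  - intros; apply comp_assoc.
Defined.

Definition FullInc (C : Category) (P : C -> Prop) : Functor (FullSub C P) C.
Proof.
  refine {| fobj := fun x : FullSub C P => proj1_sig x;
            fmap := fun x y f => f |}.
  - intros; assumption.
  - intros; reflexivity.
  - intros; reflexivity.
Defined.

Section DR.
Context {R0 R : Category} (c : Functor R0 R).

(** u : a -> b is of the form  x -> z -> y  with x -> z the image of a map k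
    of R0 (i.e. [c k] in F_~(R)) and z -> y an identity or a free iso. *)
Definition isD (o : TwOb (FsimCat c)) : Prop :=
  exists (x0 z0 : R0) (k : Hom x0 z0)
         (v : @Hom (FsimCat c) (c z0) (tcod o)) (e : tdom o = c x0),
    (is_identity v \/ free_iso c v) /\
    eq_rect (tdom o) (fun a => @Hom (FsimCat c) a (tcod o)) (tarr o) (c x0) e
      ≈ (v ∘ (single (fmap c k) : @Hom (FsimCat c) (c x0) (c z0))).

Definition D_R : Category := FullSub (Tw (FsimCat c)) isD.

Definition proj_p : Functor D_R R :=
  Fcomp (p0 c) (Fcomp (TwCod (FsimCat c)) (FullInc (Tw (FsimCat c)) isD)).

End DR.

Record SetFunctor (C : Category) : Type := {
  sobj : C -> Type;
  smap : forall a b : C, Hom a b -> sobj a -> sobj b;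
  smap_proper : forall a b (f g : Hom a b), f ≈ g -> forall x, smap a b f x = smap a b g x;
  smap_id : forall a x, smap a a (idm a) x = x;
  smap_comp : forall a b d (f : Hom b d) (g : Hom a b) x,
      smap a d (f ∘ g) x = smap b d f (smap a b g x)
}.
Arguments sobj {C} F _ : rename.
Arguments smap {C} F {a b} f x : rename.

Record NatTrans {C : Category} (F G : SetFunctor C) : Type := {
  ncomp : forall a, sobj F a -> sobj G a;
  nnat : forall a b (f : Hom a b) x, ncomp b (smap F f x) = smap G f (ncomp a x)
}.
Arguments ncomp {C F G} _ a x : rename.

Definition nat_eq {C : Category} {F G : SetFunctor C} (al be : NatTrans F G) : Prop :=
  forall a x, ncomp al a x = ncomp be a x.

Definition precomp {D C : Category} (p : Functor D C) (F : SetFunctor C) : SetFunctor D.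
Proof.
  refine {| sobj := fun d => sobj F (p d);
            smap := fun a b f x => smap F (fmap p f) x |}.
  - intros a b f g H x. apply smap_proper, fmap_proper, H.
  - intros a x. rewrite (smap_proper _ F _ _ _ _ (fmap_id p a)). apply smap_id.
  - intros a b d f g x. rewrite (smap_proper _ F _ _ _ _ (fmap_comp p f g)).
    apply smap_comp.
Defined.

Definition whisker {D C : Category} (p : Functor D C) {F G : SetFunctor C}
  (al : NatTrans F G) : NatTrans (precomp p F) (precomp p G).
Proof.
  refine (@Build_NatTrans D (precomp p F) (precomp p G)
            (fun d x => ncomp al (p d) x) _).
  intros a b f x. simpl. apply nnat.
Defined.

Definition absolutely_dense {D C : Category} (p : Functor D C) : Prop :=
  forall F G : SetFunctor C,
    (forall al be : NatTrans F G,
        nat_eq (whisker p al) (whisker p be) -> nat_eq al be) /\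
    (forall ga : NatTrans (precomp p F) (precomp p G),
        exists al : NatTrans F G, nat_eq (whisker p al) ga).

(* Main.v *)
Require Import Defs.
From Stdlib Require Import RelationClasses Morphisms Setoid ClassicalEpsilon.

Section Main.
Context {R0 R : Category} (c : Functor R0 R).

Definition Iob (x : R0) : TwOb (FsimCat c) :=
  {| tdom := (c x : FsimCat c); tcod := (c x : FsimCat c);
     tarr := (pnil (C:=R) (c x) : @Hom (FsimCat c) (c x) (c x)) |}.

Lemma Iob_D x : isD c (Iob x).
Proof.
  unfold isD. exists x, x, (idm x), (pnil (C:=R) (c x)), eq_refl. split.
  - left. exists eq_refl. simpl. apply fsim_refl.
  - simpl. exact (fsim_rel c x x (pnil x)).
Qed.

Definition Iobj x : D_R c := exist _ (Iob x) (Iob_D x).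

Lemma to_obj (o : TwOb (FsimCat c)) x0 z0 (k : Hom x0 z0)
  (v : @Hom (FsimCat c) (c z0) (tcod o)) (e : tdom o = c x0)
  (H : eq_rect (tdom o) (fun a => @Hom (FsimCat c) a (tcod o)) (tarr o) (c x0) e
      ≈ (v ∘ (single (fmap c k) : @Hom (FsimCat c) (c x0) (c z0)))) :
  { m : TwHom (FsimCat c) (Iob z0) o | twt m = v }.
Proof.
  destruct o as [a b u]; simpl in *. subst a. simpl in H.
  exists (Build_TwHom (FsimCat c) (Iob z0) {| tdom := (c x0 : FsimCat c); tcod := b; tarr := u |}
            (single (fmap c k)) v H). reflexivity.
Qed.

Definition isopair {C : Category} {a b : C} (u : Hom a b) (u' : Hom b a) :=
  u' ∘ u ≈ idm a /\ u ∘ u' ≈ idm b.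

Lemma pcomp_iso_ident (a b : FsimCat c) (e : a = b) :
  is_iso (fmap (p0 c) (eq_rect a (fun x => @Hom (FsimCat c) a x) (idm a) b e)).
Proof. destruct e. simpl. exists (idm (a : R)). split; apply comp_idl. Qed.

Lemma is_iso_proper {C : Category} {a b : C} (f g : Hom a b) :
  f ≈ g -> is_iso f -> is_iso g.
Proof.
  intros H [h [H1 H2]]. exists h. rewrite <- H. split; assumption.
Qed.

Lemma v_iso {a b : R} (v : @Hom (FsimCat c) a b) :
  is_identity v \/ free_iso c v -> is_iso (pcompose v).
Proof.
  intros [[e He]|[f [Hf He]]].
  - eapply is_iso_proper. 2: apply (pcomp_iso_ident a b e).
    symmetry. exact (fmap_proper (p0 c) He).
  - eapply is_iso_proper with f. 2: exact Hf.
    pose proof (fmap_proper (p0 c) He) as H. simpl in H. rewrite H. symmetry; apply comp_idr.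
Qed.

Variables (F G : SetFunctor R).

Lemma smap_F_proper {a b} (f g : Hom a b) x : f ≈ g -> smap F f x = smap F g x.
Proof. intros; now apply smap_proper. Qed.

Section Full.
Variable ga : NatTrans (precomp (proj_p c) F) (precomp (proj_p c) G).

Lemma gnat (d d' : D_R c) (m : @Hom (D_R c) d d') a :
  ncomp ga d' (smap F (pcompose (twt m)) a) = smap G (pcompose (twt m)) (ncomp ga d a).
Proof. exact (nnat _ _ ga d d' m a). Qed.

Definition beta x : sobj F (c x) -> sobj G (c x) := ncomp ga (Iobj x).

Lemma Uk_D x y (k : Hom x y) :
  isD c {| tdom := (c x : FsimCat c); tcod := (c y : FsimCat c);
           tarr := (single (fmap c k) : @Hom (FsimCat c) (c x) (c y)) |}.
Proof.
  exists x, y, k, (pnil (C:=R) (c y)), eq_refl. split.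
  - left. exists eq_refl. simpl. apply fsim_refl.
  - simpl. apply fsim_refl.
Qed.

Lemma beta_ck x y (k : Hom x y) a :
  beta y (smap F (fmap c k) a) = smap G (fmap c k) (beta x a).
Proof.
  set (U := exist _ _ (Uk_D x y k) : D_R c).
  set (m1 := Build_TwHom (FsimCat c) (Iob x) (proj1_sig U)
               (pnil (C:=R) (c x)) (single (fmap c k)) (fsim_refl _ _ _ _) : @Hom (D_R c) (Iobj x) U).
  set (m2 := Build_TwHom (FsimCat c) (Iob y) (proj1_sig U)
               (single (fmap c k)) (pnil (C:=R) (c y)) (fsim_refl _ _ _ _) : @Hom (D_R c) (Iobj y) U).
  pose proof (gnat _ _ m1 a) as H1. pose proof (gnat _ _ m2 (smap F (fmap c k) a)) as H2.
  simpl in H1, H2. unfold beta.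
  rewrite smap_id in H2. rewrite (smap_id _ G) in H2. rewrite <- H2.
  rewrite (smap_F_proper _ (fmap c k)) in H1 by apply comp_idr.
  rewrite H1. apply smap_proper. apply comp_idr.
Qed.

Lemma Vw_D x x' (w : @Hom R (c x) (c x')) (Hw : is_iso w) :
  isD c {| tdom := (c x : FsimCat c); tcod := (c x' : FsimCat c);
           tarr := (single w : @Hom (FsimCat c) (c x) (c x')) |}.
Proof.
  exists x, x, (idm x), (single w), eq_refl. split.
  - right. exists w. split; [exact Hw|]. apply fsim_refl.
  - simpl. change (fsim c (c x) (c x') (papp (single w) (pnil _)) (papp (single w) (single (fmap c (idm x))))).
    apply fsim_congl. exact (fsim_rel c x x (pnil x)).
Qed.

Lemma beta_iso x x' (w : @Hom R (c x) (c x')) (Hw : is_iso w) a :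
  beta x' (smap F w a) = smap G w (beta x a).
Proof.
  set (U := exist _ _ (Vw_D x x' w Hw) : D_R c).
  set (m1 := Build_TwHom (FsimCat c) (Iob x) (proj1_sig U)
               (pnil (C:=R) (c x)) (single w) (fsim_refl _ _ _ _) : @Hom (D_R c) (Iobj x) U).
  set (m2 := Build_TwHom (FsimCat c) (Iob x') (proj1_sig U)
               (single w) (pnil (C:=R) (c x')) (fsim_refl _ _ _ _) : @Hom (D_R c) (Iobj x') U).
  pose proof (gnat _ _ m1 a) as H1. pose proof (gnat _ _ m2 (smap F w a)) as H2.
  simpl in H1, H2. unfold beta.
  rewrite smap_id in H2. rewrite (smap_id _ G) in H2. rewrite <- H2.
  rewrite (smap_F_proper _ w) in H1 by apply comp_idr.
  rewrite H1. apply smap_proper. apply comp_idr.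
Qed.

Definition val {b : R} x (u : Hom b (c x)) (u' : Hom (c x) b) (a : sobj F b) : sobj G b :=
  smap G u' (beta x (smap F u a)).

Lemma indep {b : R} x (u : Hom b (c x)) u' y (v : Hom b (c y)) v' a :
  isopair u u' -> isopair v v' -> val x u u' a = val y v v' a.
Proof.
  intros [Hu1 Hu2] [Hv1 Hv2]. unfold val.
  assert (Hw : is_iso (v ∘ u')).
  { exists (u ∘ v'). split.
    - rewrite comp_assoc, <- (comp_assoc v' v u'), Hv1, comp_idl. exact Hu2.
    - rewrite comp_assoc, <- (comp_assoc u' u v'), Hu1, comp_idl. exact Hv2. }
  assert (E : smap F v a = smap F (v ∘ u') (smap F u a)).
  { rewrite <- smap_comp. apply smap_proper. rewrite comp_assoc, Hu1. symmetry; apply comp_idr. }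
  rewrite E, beta_iso by exact Hw. rewrite <- (smap_comp _ G). apply smap_proper.
  rewrite <- comp_assoc, Hv1. symmetry; apply comp_idl.
Qed.

End Full.
End Main.

Lemma iso_pair {C : Category} {a b : C} (u : Hom a b) :
  is_iso u -> exists u', isopair u u'.
Proof. intros [g [H1 H2]]. exists g. split; assumption. Qed.

Lemma choice_iso {R0 R : Category} (c : Functor R0 R) (HC : conditionC c) (b : R) :
  exists t : {x : R0 & (Hom b (c x) * Hom (c x) b)%type},
    isopair (fst (projT2 t)) (snd (projT2 t)).
Proof.
  destruct (HC b b (idm b)) as (x & y & k & w & w' & Hw & _ & _).
  destruct (iso_pair w Hw) as [wi Hwi].
  exists (existT _ x (w, wi)). exact Hwi.
Qed.

Theorem mainTheorem2 (R : Category) (HR : GenReedy R)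
  (R0 : Category) (HR0 : GenReedy R0) (HR0strict : only_identity_isos R0)
  (c : Functor R0 R) (HC : conditionC c) :
  absolutely_dense (proj_p c).
Proof.
  intros F G. split.
  - intros al be H b a.
    destruct (HC b b (idm b)) as (x & y & k & w & w' & Hw & _ & _).
    destruct (iso_pair w Hw) as [wi [Hw1 Hw2]].
    assert (E : forall (al : NatTrans F G), ncomp al b a = smap G wi (ncomp al (c x) (smap F w a))).
    { intros al0. rewrite nnat, <- smap_comp.
      rewrite (smap_proper _ G _ _ _ _ Hw1). symmetry. apply smap_id. }
    rewrite !E. f_equal. exact (H (Iobj c x) (smap F w a)).
  - intros ga.
    pose (ch := fun b => proj1_sig (constructive_indefinite_description _ (choice_iso c HC b))).
    pose (alpha := fun b a => val c F G ga (projT1 (ch b)) (fst (projT2 (ch b))) (snd (projT2 (ch b))) a).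
    assert (Hal : forall b x (u : Hom b (c x)) u' a, isopair u u' -> alpha b a = val c F G ga x u u' a).
    { intros b x u u' a Hu. unfold alpha. apply indep; [|exact Hu].
      unfold ch. destruct (constructive_indefinite_description _ (choice_iso c HC b)). exact i. }
    assert (Hnat : forall b b' (f : Hom b b') a, alpha b' (smap F f a) = smap G f (alpha b a)).
    { intros b b' f a.
      destruct (HC b b' f) as (x & y & k & u & u' & Hu & Hu' & Heq).
      destruct (iso_pair u Hu) as [ui Hui]. destruct (iso_pair u' Hu') as [u'i Hu'i].
      rewrite (Hal b' y u' u'i _ Hu'i), (Hal b x u ui _ Hui). unfold val.
      rewrite <- (smap_comp _ F). rewrite (smap_proper _ F _ _ _ _ Heq), smap_comp.
      rewrite beta_ck. rewrite <- !(smap_comp _ G). apply smap_proper.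
      destruct Hui as [Hu1 Hu2]. destruct Hu'i as [Hv1 Hv2].
      transitivity (u'i ∘ (fmap c k ∘ u) ∘ ui).
      - rewrite comp_assoc, comp_assoc, Hu2, comp_idr. reflexivity.
      - rewrite <- Heq. rewrite <- comp_assoc, Hv1, comp_idl. reflexivity. }
    exists (Build_NatTrans R F G alpha Hnat).
    intros d a. destruct d as [o Ho]. pose proof Ho as Ho'.
    destruct Ho' as (x0 & z0 & k & v & e & Hv & Heq).
    destruct (to_obj c o x0 z0 k v e Heq) as [m Hm].
    destruct (iso_pair _ (v_iso c v Hv)) as [w' [Hw1 Hw2]].
    simpl. rewrite (Hal _ z0 w' (pcompose v) a) by (split; assumption).
    unfold val, beta.
    pose proof (gnat c F G ga (Iobj c z0) (exist _ o Ho) m (smap F w' a)) as Hg.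
    simpl in Hg. rewrite Hm in Hg. rewrite <- Hg, <- smap_comp.
    rewrite (smap_proper _ F _ _ _ _ Hw2), smap_id. reflexivity.
Qed.
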